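(* Let $m>a\geq 0$, $n>b\geq0$, $h\geq 0$ be integers with $h\leq (m-a)(n-b)-\max\{m-a,n-b\}$. Then $$\mathbb{E}^{\max}_{m\times n}(a,b,h)=\{\mathcal{E}'\cup\mathcal{I}\ \mid\ \mathcal{E}'\in\mathbb{E}^{\max}_{m\times n}(a,b,0),\ \mathcal{I}\subset([m]\times[n])\setminus\mathcal{E}',\ |\mathcal{I}|=h\},$$ i.e., every maximal correctable erasure pattern of $T_{m\times n}(a,b,h)$ is obtained by adding $h$ erasures to some maximal correctable pattern of $T_{m\times n}(a,b,0)$, and every such set is a maximal correctable pattern of $T_{m\times n}(a,b,h)$.
   Context: Positions of vectors in $\mathbb{F}^{mn}$ are identified with the grid $[m]\times[n]$, where $[k]=\{1,\dots,k\}$. For linear codes $\mathcal{C}_1\subseteq\mathbb{F}^m$, $\mathcal{C}_2\subseteq\mathbb{F}^n$ with generator matrices $\mathbf{G}_1,\mathbf{G}_2$, $\mathcal{C}_1\otimes\mathcal{C}_2$ is the row span of the Kronecker product $\mathbf{G}_1\otimes\mathbf{G}_2$. A code for the topology $T_{m\times n}(a,b,h)$ is a linear code over a finite field $\mathbb{F}$ with a parity-check matrix $\begin{pmatrix}\mathbf{H}_{\mathsf{local}}\\ \mathbf{H}_{\mathsf{global}}\end{pmatrix}$, where $\mathbf{H}_{\mathsf{local}}$ is a parity-check matrix of $\mathcal{C}_{\mathsf{col}}\otimes\mathcal{C}_{\mathsf{row}}$ for some linear $[m,\geq m-a]$ code $\mathcal{C}_{\mathsf{col}}$ and $[n,\geq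 n-b]$ code $\mathcal{C}_{\mathsf{row}}$ over $\mathbb{F}$, and $\mathbf{H}_{\mathsf{global}}$ is an arbitrary $h\times mn$ matrix over $\mathbb{F}$; $\mathbb{C}_{m\times n}(a,b,h)$ is the set of all such codes (over any finite field). A code corrects an erasure pattern $\mathcal{E}\subseteq[m]\times[n]$ if no two distinct codewords agree on all positions outside $\mathcal{E}$. $\mathcal{E}$ is correctable in $T_{m\times n}(a,b,h)$ if some code in $\mathbb{C}_{m\times n}(a,b,h)$ corrects it; $\mathbb{E}_{m\times n}(a,b,h)$ is the set of such patterns and $\mathbb{E}^{\max}_{m\times n}(a,b,h)$ the set of correctable patterns not properly contained in another correctable pattern. *)

(* Defs.v *)
From HB Require Import structures.
From mathcomp Require Import all_boot all_order all_algebra all_field.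
Set Implicit Arguments. Unset Strict Implicit. Unset Printing Implicit Defensive.
Import GRing.Theory.
Local Open Scope ring_scope.

(* Vectors of F^{mn} are represented as m x n matrices (positions = grid
   'I_m * 'I_n, 0-indexed). *)

(* The tensor code C_col (x) C_row: row span of G1 (x) G2, i.e. the set of
   grid vectors sum_{k,l} c_{kl} G1(k,.) (outer) G2(l,.) = G1^T C G2. *)
Definition in_tensor (F : fieldType) (m n k1 k2 : nat)
  (G1 : 'M[F]_(k1, m)) (G2 : 'M[F]_(k2, n)) (x : 'M[F]_(m, n)) : Prop :=
  exists C : 'M[F]_(k1, k2), x = G1^T *m C *m G2.

Definition in_code (F : fieldType) (m n k1 k2 h : nat)
  (G1 : 'M[F]_(k1, m)) (G2 : 'M[F]_(k2, n)) (Hg : 'M[F]_(h, m * n))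
  (x : 'M[F]_(m, n)) : Prop :=
  in_tensor G1 G2 x /\ mxvec x *m Hg^T = 0.

Definition corrects (F : fieldType) (m n k1 k2 h : nat)
  (G1 : 'M[F]_(k1, m)) (G2 : 'M[F]_(k2, n)) (Hg : 'M[F]_(h, m * n))
  (E : {set 'I_m * 'I_n}) : Prop :=
  forall x y : 'M[F]_(m, n), in_code G1 G2 Hg x -> in_code G1 G2 Hg y ->
    (forall i j, (i, j) \notin E -> x i j = y i j) -> x = y.

(* E is correctable in T_{m x n}(a,b,h): some code of the topology, over some
   finite field, with dim C_col >= m - a and dim C_row >= n - b, corrects E. *)
Definition correctable (m n a b h : nat) (E : {set 'I_m * 'I_n}) : Prop :=
  exists (F : finFieldType) (k1 k2 : nat) (G1 : 'M[F]_(k1, m))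
         (G2 : 'M[F]_(k2, n)) (Hg : 'M[F]_(h, m * n)),
    (m - a <= \rank G1)%N /\ (n - b <= \rank G2)%N /\ corrects G1 G2 Hg E.

Definition max_correctable (m n a b h : nat) (E : {set 'I_m * 'I_n}) : Prop :=
  correctable a b h E /\
  forall E' : {set 'I_m * 'I_n}, correctable a b h E' -> E \subset E' -> E' = E.

(* Main.v *)
Require Import Defs.
From HB Require Import structures.
From mathcomp Require Import all_boot all_order all_algebra all_field.
Set Implicit Arguments. Unset Strict Implicit. Unset Printing Implicit Defensive.
Import GRing.Theory.
From mathcomp Require Import zify.
Local Open Scope ring_scope.

Section Core.
Variables (F : fieldType) (m n r1 r2 : nat).
Variables (G1 : 'M[F]_(r1, m)) (G2 : 'M[F]_(r2, n)).

Definition xw (u : 'rV[F]_(r1 * r2)) : 'M[F]_(m, n) := G1^T *m vec_mx u *m G2.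

Definition mask (X : {set 'I_m * 'I_n}) (Y : 'M[F]_(m, n)) : 'M[F]_(m, n) :=
  \matrix_(i, j) (if (i, j) \in X then Y i j else 0).

Definition fS X (u : 'rV[F]_(r1 * r2)) : 'rV[F]_(m * n) := mxvec (mask X (xw u)).

Fact fS_is_semilinear X : semilinear (fS X).
Proof.
have maskZ c Y : mask X (c *: Y) = c *: mask X Y.
  by apply/matrixP=> i j; rewrite !mxE; case: ifP; rewrite ?mulr0.
have maskD Y Z : mask X (Y + Z) = mask X Y + mask X Z.
  by apply/matrixP=> i j; rewrite !mxE; case: ifP; rewrite ?addr0.
split=> [c u|u v]; rewrite /fS /xw.
  by rewrite linearZ /= -scalemxAr -scalemxAl maskZ linearZ.
by rewrite linearD /= mulmxDr mulmxDl maskD linearD.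
Qed.
HB.instance Definition _ X :=
  GRing.isSemilinear.Build F 'rV[F]_(r1 * r2) 'rV[F]_(m * n) _ (fS X)
    (fS_is_semilinear X).

Definition S X := lin1_mx (fS X).
Lemma mulS X u : u *m S X = fS X u.
Proof. exact: mul_rV_lin1. Qed.

Definition van (X : {set 'I_m * 'I_n}) u := forall p, p \in X -> xw u p.1 p.2 = 0.

Lemma vanP X u : reflect (van X u) (u <= kermx (S X))%MS.
Proof.
rewrite sub_kermx mulS /fS mxvec_eq0; apply: (iffP eqP) => [H p pX|H].
  by have := congr1 (fun M : 'M[F]_(m, n) => M p.1 p.2) H; rewrite !mxE -surjective_pairing pX.
by apply/matrixP=> i j; rewrite [LHS]mxE [RHS]mxE; case: ifP => // /H.
Qed.

Implicit Types X Y J B : {set 'I_m * 'I_n}.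
Definition k X := \rank (kermx (S X)).

Lemma ker_sub X Y : (forall u, van Y u -> van X u) -> (kermx (S Y) <= kermx (S X))%MS.
Proof.
move=> H; apply/row_subP=> i; apply/vanP; apply: H; apply/vanP; exact: row_sub.
Qed.

Lemma k_anti X Y : X \subset Y -> (k Y <= k X)%N.
Proof.
move=> sXY; apply: mxrankS; apply: ker_sub => u H p pX; apply: H.
exact: (subsetP sXY).
Qed.

Lemma k_le X : (k X <= r1 * r2)%N.
Proof. exact: rank_leq_row. Qed.

Lemma k_set0 : k set0 = (r1 * r2)%N.
Proof.
apply/eqP; rewrite eqn_leq k_le /= /k -{1}(mxrank1 F (r1 * r2)); apply: mxrankS.
by apply/row_subP=> i; apply/vanP=> p; rewrite inE.
Qed.

Lemma rank_S1 p : (\rank (S [set p]) <= 1)%N.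
Proof.
have -> : (1 = \rank (mxvec (delta_mx p.1 p.2 : 'M[F]_(m, n))))%N.
  rewrite rank_rV mxvec_eq0; case: eqP => //= /matrixP /(_ p.1 p.2).
  by rewrite !mxE !eqxx => /eqP; rewrite oner_eq0.
apply: mxrankS; apply/row_subP=> i; rewrite rowE mulS /fS.
have -> : mask [set p] (xw (delta_mx 0 i)) = xw (delta_mx 0 i) p.1 p.2 *: delta_mx p.1 p.2.
  case: p => p1 p2; apply/matrixP=> a b; rewrite !mxE inE xpair_eqE /=.
  by case: eqP => [->|]; case: eqP => [->|] /=; rewrite ?mulr1 ?mulr0.
by rewrite linearZ /= scalemx_sub.
Qed.

Lemma k_step X p : (k X <= k (X :|: [set p]) + 1)%N.
Proof.
set A := kermx (S X); set B := kermx (S [set p]).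
have hB : (r1 * r2 - 1 <= \rank B)%N by rewrite /B mxrank_ker leq_sub2l // rank_S1.
have hAB : (\rank (A + B) <= r1 * r2)%N by exact: rank_leq_col.
have hcap := mxrank_sum_cap A B.
have hk : (\rank (A :&: B) <= k (X :|: [set p]))%N.
  apply: mxrankS; apply/row_subP=> i.
  have /vanP vA : (row i (A :&: B) <= A)%MS by apply: submx_trans (row_sub _ _) (capmxSl _ _).
  have /vanP vB : (row i (A :&: B) <= B)%MS by apply: submx_trans (row_sub _ _) (capmxSr _ _).
  by apply/vanP=> q; rewrite inE => /orP[/vA|/vB].
rewrite /k -/A; have := k_le X; rewrite /k -/A => hA.
rewrite /k in hk; lia.
Qed.

Lemma k_aug J X : J \subset X -> (forall p, p \in X -> k (J :|: [set p]) = k J) -> k X = k J.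
Proof.
move=> sJX H; apply/eqP; rewrite eqn_leq k_anti //=.
apply: mxrankS; apply: ker_sub => u vJ q qX.
have e := H q qX.
have sub : (kermx (S (J :|: [set q])) <= kermx (S J))%MS.
  by apply: ker_sub => w vw r rJ; apply: vw; rewrite inE rJ.
have sub2 : (kermx (S J) <= kermx (S (J :|: [set q])))%MS.
  by rewrite -(mxrank_leqif_sup sub).2; rewrite /k in e; rewrite e.
have : (u <= kermx (S (J :|: [set q])))%MS by apply: submx_trans sub2; apply/vanP.
by move/vanP; apply; rewrite !inE eqxx orbT.
Qed.

Lemma k_card X : (r1 * r2 <= k X + #|X|)%N.
Proof.
move: {-1}#|X| (erefl #|X|) => c; elim: c X => [|c IH] Y cY.
  have -> : Y = set0 by apply/eqP; rewrite -cards_eq0 cY.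
  by rewrite k_set0 addn0.
have [p pY] : exists p, p \in Y by apply/set0Pn; rewrite -card_gt0 cY.
have eY : Y = (Y :\ p) :|: [set p] by rewrite setUC setD1K.
rewrite (cardsD1 p Y) pY in cY.
have h1 := IH (Y :\ p) (eq_add_S _ _ cY).
have h2 := k_step (Y :\ p) p; rewrite -eY in h2.
lia.
Qed.

Lemma grow t J X : J \subset X -> (r1 * r2 - k J = #|J|)%N -> k J = (k X + t)%N ->
  exists B, [/\ J \subset B, B \subset X, (r1 * r2 - k B = #|B|)%N & k B = k X].
Proof.
elim: t J => [|t IH] J sJX rJ kJ; first by exists J; split; rewrite // kJ addn0.
case: (pickP [pred p | (p \in X) && (k (J :|: [set p]) != k J)]) => [p /andP[pX kp] | none]; last first.
  have kXJ : k X = k J.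
    by apply: (k_aug sJX) => p pX; have := none p; rewrite /= pX /= => /negbFE /eqP.
  lia.
have h1 : (k (J :|: [set p]) <= k J)%N by apply: k_anti; exact: subsetUl.
have h2 := k_step J p.
have pJ : p \notin J.
  apply/negP => pJ; move: kp; suff -> : J :|: [set p] = J by rewrite eqxx.
  by apply/setUidPl; rewrite sub1set.
have cJ : #|J :|: [set p]| = #|J|.+1 by rewrite setUC cardsU1 pJ.
have hk := k_le J.
have [B [sB1 sB2 rB kB]] : exists B, [/\ J :|: [set p] \subset B, B \subset X, (r1 * r2 - k B = #|B|)%N & k B = k X].
  apply: IH.
  - by rewrite subUset sJX sub1set pX.
  - rewrite cJ. move/eqP: kp => kp. lia.
  - move/eqP: kp => kp. lia.
exists B; split => //; exact: subset_trans (subsetUl _ _) sB1.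
Qed.

Lemma xw_inj : row_free G1 -> row_free G2 -> forall u, xw u = 0 -> u = 0.
Proof.
move=> f1 f2 u; rewrite /xw -mulmxA => H.
have H1 : (vec_mx u *m G2)^T *m G1 = 0 *m G1 by rewrite mul0mx -[G1 in LHS]trmxK -trmx_mul H trmx0.
have := row_free_inj f1 H1 => /(congr1 trmx); rewrite trmxK trmx0 => H2.
have H3 : vec_mx u *m G2 = 0 *m G2 by rewrite mul0mx H2.
by have := row_free_inj f2 H3 => /eqP; rewrite vec_mx_eq0 => /eqP.
Qed.

Lemma k_setT : row_free G1 -> row_free G2 -> k setT = 0%N.
Proof.
move=> f1 f2; apply/eqP; rewrite /k mxrank_eq0 -submx0; apply/row_subP=> i.
have /vanP v := row_sub i (kermx (S setT)).
have -> : row i (kermx (S setT)) = 0; last exact: sub0mx.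
apply: (xw_inj f1 f2); apply/matrixP=> a b; rewrite [RHS]mxE.
exact: (v (a, b) (in_setT _)).
Qed.

Lemma L1 h (H : 'M[F]_(r1 * r2, h)) X :
  (forall u, u *m H = 0 -> van X u -> u = 0) -> (k X <= h)%N.
Proof.
move=> hyp; set A := kermx (S X); set B := kermx H.
have hcap := mxrank_sum_cap A B.
have hAB : (\rank (A + B) <= r1 * r2)%N by exact: rank_leq_col.
have hB : \rank B = (r1 * r2 - \rank H)%N by exact: mxrank_ker.
have hH : (\rank H <= h)%N by exact: rank_leq_col.
have hH2 : (\rank H <= r1 * r2)%N by exact: rank_leq_row.
have h0 : \rank (A :&: B) = 0%N.
  apply/eqP; rewrite mxrank_eq0 -submx0; apply/row_subP=> i.
  have rA : (row i (A :&: B) <= A)%MS by apply: submx_trans (row_sub _ _) (capmxSl _ _).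
  have rB : (row i (A :&: B) <= B)%MS by apply: submx_trans (row_sub _ _) (capmxSr _ _).
  move/vanP: rA => rA; move: rB; rewrite sub_kermx => /eqP rB.
  by rewrite (hyp _ rB rA) sub0mx.
rewrite /k -/A; lia.
Qed.
End Core.

Lemma shrink (F : fieldType) k1 m r (G : 'M[F]_(k1, m)) : (r <= \rank G)%N ->
  exists G' : 'M[F]_(r, m), row_free G' /\ exists W : 'M[F]_(r, k1), G' = W *m G.
Proof.
move=> hr; exists (pid_mx r *m row_base G); split.
  rewrite /row_free mxrankMfree ?row_base_free // rank_pid_mx //.
have : ((pid_mx r : 'M[F]_(r, \rank G)) *m row_base G <= G)%MS.
  by have := submxMl (pid_mx r : 'M[F]_(r, \rank G)) (row_base G); rewrite eq_row_base.
by case/submxP=> W ->; exists W.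
Qed.

Lemma mask_setT (F : fieldType) m n (Y : 'M[F]_(m, n)) : mask setT Y = Y.
Proof. by apply/matrixP=> i j; rewrite mxE in_setT. Qed.

Lemma sub_tensor (F : fieldType) m n k1 k2 r1 r2 (G1 : 'M[F]_(k1, m)) (G2 : 'M[F]_(k2, n))
  (W1 : 'M[F]_(r1, k1)) (W2 : 'M[F]_(r2, k2)) x :
  in_tensor (W1 *m G1) (W2 *m G2) x -> in_tensor G1 G2 x.
Proof.
case=> C ->; exists (W1^T *m C *m W2).
by rewrite trmx_mul !mulmxA.
Qed.

Lemma reduce (a b h m n : nat) (E : {set 'I_m * 'I_n}) : correctable a b h E ->
  exists (F : finFieldType) (G1 : 'M[F]_(m - a, m)) (G2 : 'M[F]_(n - b, n)),
    [/\ row_free G1, row_free G2 & (k G1 G2 (~: E) <= h)%N].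
Proof.
case=> F [k1 [k2 [G1 [G2 [Hg [r1 [r2 cor]]]]]]].
have [G1' [f1 [W1 e1]]] := shrink r1.
have [G2' [f2 [W2 e2]]] := shrink r2.
exists F, G1', G2'; split => //.
apply: (L1 (H := S G1' G2' setT *m Hg^T)) => u hu vu.
apply: (xw_inj f1 f2).
have cx : in_code G1 G2 Hg (xw G1' G2' u).
  split; first by apply: (sub_tensor (W1 := W1) (W2 := W2)); rewrite -e1 -e2; exists (vec_mx u).
  have e : mxvec (xw G1' G2' u) = u *m S G1' G2' setT by rewrite mulS /fS mask_setT.
  by rewrite e -mulmxA.
have c0 : in_code G1 G2 Hg 0.
  by split; [exists 0; rewrite mulmx0 mul0mx | rewrite linear0 mul0mx].
apply: (cor _ _ cx c0) => i j ij; rewrite [RHS]mxE; apply: (vu (i, j)); by rewrite inE.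
Qed.

Lemma build (F : finFieldType) a b h m n (G1 : 'M[F]_(m - a, m)) (G2 : 'M[F]_(n - b, n))
  (E I : {set 'I_m * 'I_n}) (p0 : 'I_m * 'I_n) :
  row_free G1 -> row_free G2 -> k G1 G2 (~: E) = 0%N -> #|I| = h ->
  correctable a b h (E :|: I).
Proof.
move=> f1 f2 k0 cI.
pose e := enum I.
pose idx (s : 'I_h) := mxvec_index (nth p0 e s).1 (nth p0 e s).2.
pose Hg : 'M[F]_(h, m * n) := \matrix_(s < h) (delta_mx 0 (idx s) : 'rV[F]_(m * n)).
have HgP : forall x : 'M[F]_(m, n), mxvec x *m Hg^T = 0 -> forall q, q \in I -> x q.1 q.2 = 0.
  move=> x hx q qI.
  have qe : q \in e by rewrite mem_enum.
  have ls : (index q e < h)%N by rewrite -cI cardE index_mem.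
  have := congr1 (fun M : 'rV[F]_h => M 0 (Ordinal ls)) hx.
  rewrite [RHS]mxE mxE (bigD1 (idx (Ordinal ls))) //= big1 ?addr0.
    by rewrite !mxE !eqxx mulr1 /idx /= nth_index // mxvecE.
  by move=> t nt; rewrite !mxE eqxx /= (negbTE nt) mulr0.
have kk : forall u, van G1 G2 (~: E) u -> u = 0.
  move=> u /vanP; move: k0; rewrite /k => /eqP; rewrite mxrank_eq0 => /eqP ->.
  by rewrite submx0 => /eqP.
exists F, (m - a)%N, (n - b)%N, G1, G2, Hg; split; [|split].
- by move/eqP: f1 => ->.
- by move/eqP: f2 => ->.
move=> x y [[Cx ex] hx] [[Cy ey] hy] agree.
set u := mxvec Cx - mxvec Cy.
have xu : xw G1 G2 u = x - y.
  by rewrite /xw linearB /= !mxvecK mulmxBr mulmxBl ex ey.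
apply/eqP; rewrite -subr_eq0 -xu (kk u); first by rewrite /xw linear0 mulmx0 mul0mx.
move=> q; rewrite inE => qE; rewrite xu !mxE.
case qI: (q \in I).
  by rewrite (HgP x hx q qI) (HgP y hy q qI) subrr.
by rewrite agree ?subrr //; rewrite -surjective_pairing inE negb_or qE qI.
Qed.

Lemma card_bound a b h m n (E : {set 'I_m * 'I_n}) : correctable a b h E ->
  (#|E| + (m - a) * (n - b) <= m * n + h)%N.
Proof.
case/reduce=> F [G1 [G2 [f1 f2 kh]]].
have h1 := k_card G1 G2 (~: E).
have h2 := cardsC E; rewrite card_prod !card_ord in h2.
lia.
Qed.

Lemma pad (T : finType) (J B : {set T}) h : J \subset B -> (#|J| <= h)%N -> (h <= #|B|)%N ->
  exists I : {set T}, [/\ J \subset I, I \subset B & #|I| = h].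
Proof.
move: {-1}(h - #|J|)%N (erefl (h - #|J|)%N) => t.
elim: t J => [|t IH] J et sJB hJ hB.
  by exists J; split => //; apply/eqP; rewrite eqn_leq hJ /=; lia.
have : ~~ (B \subset J).
  apply/negP => sBJ; have := subset_leq_card sBJ; lia.
case/subsetPn=> p pB pJ.
have [I [s1 s2 s3]] : exists I : {set T}, [/\ p |: J \subset I, I \subset B & #|I| = h].
  apply: IH; rewrite ?cardsU1 ?pJ /=; try lia.
  by rewrite subUset sub1set pB sJB.
by exists I; split => //; apply: subset_trans s1; apply: subsetUr.
Qed.

Theorem theorem2 (m n a b h : nat) :
  (a < m)%N -> (b < n)%N ->
  (h <= (m - a) * (n - b) - maxn (m - a) (n - b))%N ->
  forall E : {set 'I_m * 'I_n},
    max_correctable a b h E <->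
    exists E' : {set 'I_m * 'I_n}, exists I : {set 'I_m * 'I_n},
      [/\ max_correctable a b 0 E', I \subset ~: E', #|I| = h & E = E' :|: I].
Proof.
move=> am bn hle E.
have p0 : 'I_m * 'I_n := (Ordinal (leq_ltn_trans (leq0n a) am), Ordinal (leq_ltn_trans (leq0n b) bn)).
have hd : (h <= (m - a) * (n - b))%N by apply: leq_trans hle (leq_subr _ _).
have cT := cardsC (E : {set 'I_m * 'I_n}).
split.
- case=> cE maxE.
  have [F [G1 [G2 [f1 f2 kh]]]] := reduce cE.
  have kT := k_setT f1 f2.
  have k0 := k_set0 G1 G2.
  have kl := k_le G1 G2 (~: E).
  have s1 : ((m - a) * (n - b) - k G1 G2 set0 = #|(set0 : {set 'I_m * 'I_n})|)%N.
    by rewrite k0 subnn cards0.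
  have s2 : k G1 G2 set0 = (k G1 G2 (~: E) + ((m - a) * (n - b) - k G1 G2 (~: E)))%N.
    by rewrite k0 subnKC.
  have [B0 [_ sB0 rB0 kB0]] := grow (sub0set (~: E)) s1 s2.
  have s3 : k G1 G2 B0 = (k G1 G2 setT + k G1 G2 B0)%N by rewrite kT.
  have [B [sB0B _ rB kB]] := grow (subsetT B0) rB0 s3.
  have cB : #|B| = ((m - a) * (n - b))%N by rewrite -rB kB kT subn0.
  have cJ : (#|B :&: E| <= h)%N.
    have s4 : B0 \subset B :\: E by rewrite setDE subsetI sB0B sB0.
    have := subset_leq_card s4; have := cardsID E B; lia.
  have hB : (h <= #|B|)%N by rewrite cB.
  have [I [sJI sIB cI]] := pad (subsetIl B E) cJ hB.
  have cBc := cardsC B.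
  rewrite card_prod !card_ord in cBc.
  have kBB : k G1 G2 (~: ~: B) = 0%N by rewrite setCK kB kT.
  exists (~: B), I; split.
  + split.
      by have := build p0 f1 f2 kBB (cards0 _); rewrite setU0.
    move=> F' cF' sub; have := card_bound cF'.
    have := subset_leq_card sub; move=> h1 h2.
    apply/eqP; rewrite eq_sym eqEcard sub /=.
    have e : (#|~: B| + (m - a) * (n - b) = m * n)%N by rewrite addnC -cB.
    by rewrite -(leq_add2r ((m - a) * (n - b))) e; rewrite addn0 in h2.
  + by apply: (subset_trans sIB); apply/subsetP => x; rewrite !inE negbK.
  + exact: cI.
  + apply/esym/maxE; first exact: build p0 f1 f2 kBB cI.
    apply/subsetP => x xE; rewrite !inE; case xB: (x \in B) => //=.
    by apply: (subsetP sJI); rewrite inE xB xE.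
- case=> E' [I [[cE' maxE'] sI cI ->]].
  have [F [G1 [G2 [f1 f2 kh]]]] := reduce cE'.
  have kE : k G1 G2 (~: E') = 0%N by lia.
  have k0 := k_set0 G1 G2.
  have s1 : ((m - a) * (n - b) - k G1 G2 set0 = #|(set0 : {set 'I_m * 'I_n})|)%N.
    by rewrite k0 subnn cards0.
  have s2 : k G1 G2 set0 = (k G1 G2 (~: E') + (m - a) * (n - b))%N by rewrite k0 kE.
  have [B [_ sB rB kB]] := grow (sub0set (~: E')) s1 s2.
  have kBB : k G1 G2 (~: ~: B) = 0%N by rewrite setCK kB kE.
  have eB : ~: B = E'.
    apply: maxE'; first by have := build p0 f1 f2 kBB (cards0 _); rewrite setU0.
    by rewrite subsetC.
  have cBc := cardsC B.
  rewrite card_prod !card_ord eB in cBc.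
  have cB : #|B| = ((m - a) * (n - b))%N by rewrite -rB kB kE subn0.
  have dj : E' :&: I = set0.
    by rewrite setIC; apply: disjoint_setI0; rewrite disjoints_subset.
  have cU := cardsUI E' I; rewrite dj cards0 in cU.
  split; first exact: build p0 f1 f2 kE cI.
  move=> F' cF' sub; have := card_bound cF'.
  have := subset_leq_card sub; move=> h1 h2.
  apply/eqP; rewrite eq_sym eqEcard sub /=.
  have e : (#|E' :|: I| + (m - a) * (n - b) = m * n + h)%N.
    by rewrite addn0 in cU; rewrite cU -cI -cB -cBc; lia.
  by rewrite -(leq_add2r ((m - a) * (n - b))) e.
Qed.
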